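(* Let $m \geq 2$ be an integer. Let $P_m(z) \in \mathbb{Z}[[z]]$ be the unique formal power series with constant term $1$ satisfying $$P_m = 1 + z\,(P_m)^{(m-1)^2}.$$ Define the integers $\alpha_n$ ($n \geq 1$) by the formal product factorization $$P_m(z) = \prod_{n=1}^{\infty} \bigl(1 - (-1)^{mn} z^n\bigr)^{\alpha_n},$$ and set $\Omega(n\gamma_c) := \dfrac{m\,\alpha_n}{n}$. Then for every $n \geq 1$, $$\Omega(n \gamma_{c}) = \frac{m}{(m-1)^2 n^2}\sum_{d\mid n} (-1)^{m d + 1}\, \mu\!\left(\frac{n}{d} \right) \binom{(m-1)^2 d}{d},$$ where $\mu$ is the Möbius function.
   Context: In the paper, $\Omega(n\gamma_c)$ denotes the BPS index (second helicity supertrace) of the charge $n\gamma_c$ for a four-dimensional $\mathcal{N}=2$ theory whose spectral network at the critical phase is an ''$m$-herd''; the paper shows that the street factor generating function $P_m$ of such a network satisfies the displayed algebraic equation and that $\Omega(n\gamma_c) = m\alpha_n/n$ with $\alpha_n$ the exponents of the displayed factorization. The product factorization is a formal one: the exponents $\alpha_n$ are uniquely determined by comparing coefficients of $\log P_m$ order by order in $z$. *)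

(* Defs.v *)
From mathcomp Require Import all_boot all_order all_algebra.
Set Implicit Arguments. Unset Strict Implicit. Unset Printing Implicit Defensive.
Import Order.TTheory GRing.Theory Num.Theory.
Local Open Scope ring_scope.

(* A formal power series: its coefficient sequence ([z^j] f = f j). *)
Definition fps := nat -> rat.

Definition fps_one : fps := fun j => if j == 0%N then 1 else 0.
Definition fps_z (f : fps) : fps := fun j => if j is j'.+1 then f j' else 0.
Definition fps_add (f g : fps) : fps := fun j => f j + g j.
Definition fps_mul (f g : fps) : fps :=
  fun j => \sum_(i < j.+1) f i * g (j - i)%N.
Definition fps_pow (f : fps) (k : nat) : fps := iter k (fps_mul f) fps_one.

Definition gbinom (a : rat) (k : nat) : rat :=
  (\prod_(i < k) (a - i%:R)) / (k`!)%:R.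

(* (1 - s z^n)^a  (n >= 1) as a formal power series, via the binomial series
   sum_k binom(a,k) (-s z^n)^k *)
Definition fps_binpow (n : nat) (s a : rat) : fps :=
  fun j => if (n %| j)%N then gbinom a (j %/ n) * (- s) ^+ (j %/ n) else 0.

(* Formal infinite product  prod_{n>=1} F n, for factors with F n = 1 + O(z^n):
   the coefficient of z^j is that of the finite product over 1 <= n <= j. *)
Definition fps_infprod (F : nat -> fps) : fps :=
  fun j => (\big[fps_mul/fps_one]_(1 <= n < j.+1) F n) j.

Definition moebius (n : nat) : int :=
  if (0 < n)%N && all (fun p => logn p n == 1%N) (primes n)
  then (-1) ^+ size (primes n) else 0.

(* Main.v *)
Require Import Defs.
From HB Require Import structures.
From mathcomp Require Import all_boot all_order all_algebra.
From mathcomp Require Import boolp.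
From mathcomp Require Import ring zify.
Set Implicit Arguments. Unset Strict Implicit. Unset Printing Implicit Defensive.
Import Order.TTheory GRing.Theory Num.Theory.
Local Open Scope ring_scope.

Definition fpsR : Type := nat -> rat.
HB.instance Definition _ := gen_eqMixin fpsR.
HB.instance Definition _ := gen_choiceMixin fpsR.

Definition fzero : fpsR := fun _ => 0.
Definition fopp (f : fpsR) : fpsR := fun j => - f j.
Definition fadd (f g : fpsR) : fpsR := fps_add f g.

Lemma faddA : associative fadd.
Proof. by move=> f g h; apply: funext => j; rewrite /fadd /fps_add addrA. Qed.
Lemma faddC : commutative fadd.
Proof. by move=> f g; apply: funext => j; rewrite /fadd /fps_add addrC. Qed.
Lemma fadd0 : left_id fzero fadd.
Proof. by move=> f; apply: funext => j; rewrite /fadd /fps_add add0r. Qed.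
Lemma faddN : left_inverse fzero fopp fadd.
Proof. by move=> f; apply: funext => j; rewrite /fadd /fps_add addNr. Qed.
HB.instance Definition _ := GRing.isZmodule.Build fpsR faddA faddC fadd0 faddN.

Definition tp (N : nat) (f : fps) : {poly rat} := \poly_(i < N) f i.

Lemma mulE f g N j : (j < N)%N -> fps_mul f g j = (tp N f * tp N g)`_j.
Proof.
move=> jN; rewrite coefM /fps_mul; apply: eq_bigr => i _.
have h1 : (i < N)%N by apply: leq_ltn_trans jN; rewrite -ltnS.
have h2 : (j - i < N)%N by apply: leq_ltn_trans jN; rewrite leq_subr.
by rewrite !coef_poly h1 h2.
Qed.

Lemma coefM_eq (p p' q : {poly rat}) j :
  (forall i, (i <= j)%N -> p`_i = p'`_i) -> (p * q)`_j = (p' * q)`_j.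
Proof. by move=> H; rewrite !coefM; apply: eq_bigr => i _; rewrite H // -ltnS. Qed.

Lemma fmulA : associative fps_mul.
Proof.
move=> f g h; apply: funext => j.
rewrite (mulE _ _ (ltnSn j)) [RHS](mulE _ _ (ltnSn j)).
transitivity ((tp j.+1 f * (tp j.+1 g * tp j.+1 h))`_j).
  rewrite !(mulrC (tp _ f)); apply: coefM_eq => i ij.
  by rewrite coef_poly ltnS ij; apply: mulE; rewrite ltnS.
rewrite mulrA; symmetry; apply: coefM_eq => i ij.
by rewrite coef_poly ltnS ij; apply: mulE; rewrite ltnS.
Qed.

Lemma fmulC : commutative fps_mul.
Proof.
move=> f g; apply: funext => j.
by rewrite (mulE _ _ (ltnSn j)) [RHS](mulE _ _ (ltnSn j)) mulrC.
Qed.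

Lemma fmul1 : left_id fps_one fps_mul.
Proof.
move=> f; apply: funext => j; rewrite /fps_mul big_ord_recl /= /fps_one /= mul1r subn0.
by rewrite big1 ?addr0 // => i _; rewrite mul0r.
Qed.

Lemma fmulDl : left_distributive fps_mul fadd.
Proof.
move=> f g h; apply: funext => j; rewrite /fadd /fps_add /fps_mul -big_split /=.
by apply: eq_bigr => i _; rewrite mulrDl.
Qed.

Lemma fone_neq0 : (fps_one : fpsR) != fzero.
Proof.
apply/eqP => H; have := congr1 (fun f => f 0%N) H.
by rewrite /fps_one /fzero /= => /eqP; rewrite oner_eq0.
Qed.

HB.instance Definition _ := GRing.Zmodule_isComNzRing.Build fpsR fmulA fmulC fmul1 fmulDl fone_neq0.

Lemma test (f g : fpsR) : (f + g) * (f + g) = f * f + 2%:R * f * g + g * g.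
Proof. ring. Qed.

Lemma mulfE (f g : fpsR) j : (f * g) j = \sum_(i < j.+1) f i * g (j - i)%N.
Proof. by []. Qed.
Lemma addfE (f g : fpsR) j : (f + g) j = f j + g j.
Proof. by []. Qed.
Lemma oppfE (f : fpsR) j : (- f) j = - f j.
Proof. by []. Qed.
Lemma subfE (f g : fpsR) j : (f - g) j = f j - g j.
Proof. by []. Qed.
Lemma zerofE j : (0 : fpsR) j = 0.
Proof. by []. Qed.
Lemma onefE j : (1 : fpsR) j = if j == 0%N then 1 else 0.
Proof. by []. Qed.

Definition cst (c : rat) : fpsR := fun j => if j == 0%N then c else 0.

Lemma cstME c (f : fpsR) j : (cst c * f) j = c * f j.
Proof.
rewrite mulfE big_ord_recl /= subn0 big1 ?addr0 // => i _.
by rewrite /cst /= mul0r.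
Qed.

Lemma natf n : (n%:R : fpsR) = cst n%:R.
Proof.
elim: n => [|n IH]; first by apply: funext => j; rewrite /cst; case: (j == 0%N).
rewrite -addn1 !natrD IH; apply: funext => j; rewrite addfE /cst.
have -> : (1%:R : fpsR) j = if j == 0%N then 1 else 0 by [].
by case: (j == 0%N); rewrite ?addr0.
Qed.

Lemma cstD a b : cst (a + b) = cst a + cst b.
Proof. by apply: funext => j; rewrite addfE /cst; case: (j == 0%N); rewrite ?addr0. Qed.

Lemma cst1 : cst 1 = 1.
Proof. by []. Qed.

Lemma mulf0 (f g : fpsR) : (f * g) 0%N = f 0%N * g 0%N.
Proof. by rewrite mulfE big_ord1. Qed.

Definition zz : fpsR := fun j => if j == 1%N then 1 else 0.

Lemma zzE (f : fpsR) j : (zz * f) j = if j is j'.+1 then f j' else 0.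
Proof.
rewrite mulfE big_ord_recl /= /zz /= mul0r add0r.
case: j => [|j]; first by rewrite big_ord0.
rewrite big_ord_recl /= mul1r subSS subn0 big1 ?addr0 // => i _.
by rewrite /bump /= mul0r.
Qed.

Lemma zzXE n (f : fpsR) j :
  (zz ^+ n * f) j = if (n <= j)%N then f (j - n)%N else 0.
Proof.
elim: n j => [|n IH] j; first by rewrite expr0 mul1r subn0.
by rewrite exprS -mulrA zzE; case: j => [|j] //; rewrite IH ltnS subSS.
Qed.

Lemma fps_zE (f : fps) : fps_z f = zz * (f : fpsR).
Proof. by apply: funext => j; rewrite zzE; case: j. Qed.

Lemma fps_powE (f : fps) k : fps_pow f k = (f : fpsR) ^+ k.
Proof.
elim: k => [|k IH]; first by [].
by rewrite exprS -IH.
Qed.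

(* theta = z d/dz *)
Definition th (f : fpsR) : fpsR := fun j => j%:R * f j.

Lemma thM (f g : fpsR) : th (f * g) = th f * g + f * th g.
Proof.
apply: funext => j; rewrite /th addfE !mulfE mulr_sumr -big_split /=.
apply: eq_bigr => i _; rewrite natrB; last by rewrite -ltnS.
ring.
Qed.

Lemma thD (f g : fpsR) : th (f + g) = th f + th g.
Proof. by apply: funext => j; rewrite /th !addfE mulrDr. Qed.

Lemma thN (f : fpsR) : th (- f) = - th f.
Proof. by apply: funext => j; rewrite /th !oppfE mulrN. Qed.

Lemma thB (f g : fpsR) : th (f - g) = th f - th g.
Proof. by rewrite thD thN. Qed.

Lemma thC c : th (cst c) = 0.
Proof. by apply: funext => j; rewrite /th /cst; case: j => [|j] /=; rewrite ?mul0r ?mulr0. Qed.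

Lemma th1 : th 1 = 0.
Proof. by rewrite -cst1 thC. Qed.

Lemma thzz : th zz = zz.
Proof. by apply: funext => j; rewrite /th /zz; case: (j =P 1%N) => [->|]; rewrite ?mul1r ?mulr0. Qed.

Lemma thX (f : fpsR) n : th (f ^+ n.+1) = n.+1%:R * f ^+ n * th f.
Proof.
elim: n => [|n IH]; first by rewrite expr1 expr0 mulr1 mul1r.
rewrite exprS thM IH !exprS; ring.
Qed.

Lemma mul_cancel (X A B : fpsR) : X 0%N != 0 -> X * A = X * B -> A = B.
Proof.
move=> X0 H; apply: funext => j; elim/ltn_ind: j => j IH.
have := congr1 (fun f => f j) H; rewrite !mulfE !big_ord_recl /= !subn0.
rewrite (eq_bigr (fun i : 'I_j => X (bump 0 i) * B (j - bump 0 i)%N)); last first.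
  move=> i _; rewrite IH //; rewrite /bump /=; case: j i IH {H} => [[]//|j] i _.
  by rewrite add1n subSS ltnS leq_subr.
by move/addIr/(mulfI X0).
Qed.

Lemma ode_uniq (X Y G : fpsR) : X 0%N = 1 -> Y 0%N = 1 -> G 0%N = 0 ->
  th X = X * G -> th Y = Y * G -> X = Y.
Proof.
move=> X0 Y0 G0 HX HY; apply: funext => j; elim/ltn_ind: j => j IH.
case: j IH => [|j] IH; first by rewrite X0 Y0.
have hX := congr1 (fun f => f j.+1) HX; have hY := congr1 (fun f => f j.+1) HY.
move: hX; rewrite /th /= mulfE big_ord_recr /= subnn G0 mulr0 addr0 => hX.
move: hY; rewrite /th /= mulfE big_ord_recr /= subnn G0 mulr0 addr0 => hY.
move: hX; rewrite (eq_bigr (fun i : 'I_j.+1 => Y i * G (j.+1 - i)%N)); last first.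
  by move=> i _; rewrite IH.
rewrite -hY => /(mulfI _); apply; by rewrite pnatr_eq0.
Qed.

Lemma natME n (f : fpsR) j : (n%:R * f) j = n%:R * f j.
Proof. by rewrite natf cstME. Qed.

Lemma natf0 n : (n%:R : fpsR) 0%N = n%:R.
Proof. by rewrite natf. Qed.

Section PPart.
Variable k' : nat.
Let k := k'.+1.
Variable P : fpsR.
Hypothesis hP0 : P 0%N = 1.
Hypothesis hP : P = 1 + zz * P ^+ k.

Lemma hPr r : P ^+ r.+1 = P ^+ r + zz * P ^+ (r + k).
Proof.
rewrite exprS {1}hP exprD; ring.
Qed.

Definition bb r : fpsR := fun n => ('C(k * n + r, n))%:R.

Lemma Bpow n r : (P ^+ r * bb 0) n = bb r n.
Proof.
elim/ltn_ind: n r => n IHn r.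
elim: r => [|r IHr]; first by rewrite expr0 mul1r.
rewrite hPr mulrDl -mulrA addfE zzE IHr {IHr}.
case: n IHn => [|q] IHn; first by rewrite /bb !muln0 !add0n !bin0 addr0.
rewrite IHn // /bb -natrD; congr (_%:R).
rewrite addnS binS; congr (_ + _); congr ('C(_, _)).
rewrite mulnS; lia.
Qed.

Definition bm : fpsR := fun n => ('C(k * n - 1, n))%:R.

Lemma b0_split : bb 0 = bm + zz * bb k'.
Proof.
apply: funext => n; rewrite addfE zzE /bb /bm.
case: n => [|q]; first by rewrite !muln0 bin0 addr0.
rewrite -natrD addn0.
have -> : (k * q.+1 = (k * q + k').+1)%N by rewrite /k; lia.
by rewrite binS subn1 /=.
Qed.

Lemma kbm : k%:R * bm = 1 + k'%:R * bb 0.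
Proof.
apply: funext => n; rewrite addfE !natME /bb /bm onefE.
case: n => [|q]; first by rewrite muln0 bin0 /= !mulr1 /k -addn1 natrD addrC.
rewrite add0r addn0 -!natrM; congr (_%:R).
apply/eqP; rewrite -(eqn_pmul2l (ltn0Sn q)); apply/eqP.
have := mul_bin_down (k * q.+1) q.+1 => h.
rewrite subn1 mulnA (mulnC q.+1) h mulnA; congr (_ * _)%N; rewrite /k; lia.
Qed.

Lemma BU : bb 0 * (k%:R - k'%:R * P) = P.
Proof.
have E1 : zz * P ^+ k - P + 1 = 0 by rewrite {2}hP; ring.
have E2 : bb 0 - bm - zz * P ^+ k' * bb 0 = 0.
  rewrite {1}b0_split; have -> : bb k' = P ^+ k' * bb 0.
    by apply: funext => n; rewrite Bpow.
  ring.
have E3 : k%:R * bm - 1 - k'%:R * bb 0 = 0 by rewrite kbm; ring.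
apply/eqP; rewrite -subr_eq0; apply/eqP.
transitivity (k%:R * P * (bb 0 - bm - zz * P ^+ k' * bb 0)
   + k%:R * bb 0 * (zz * P ^+ k - P + 1) + P * (k%:R * bm - 1 - k'%:R * bb 0)).
  rewrite /k exprS; ring.
by rewrite E1 E2 E3; ring.
Qed.

Definition Cs : fpsR := fun N => if N == 0%N then 0 else ('C(k * N, N))%:R / k%:R.

Lemma BCs : bb 0 = 1 + k%:R * Cs.
Proof.
apply: funext => n; rewrite addfE natME onefE /bb /Cs addn0.
case: n => [|q] /=; first by rewrite muln0 bin0 mulr0 addr0.
by rewrite add0r mulrC divfK // pnatr_eq0.
Qed.

Lemma CsU : Cs * (k%:R - k'%:R * P) = P - 1.
Proof.
apply: (@mul_cancel (k%:R)); first by rewrite natf0 pnatr_eq0.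
have := BU; rewrite BCs => h.
have hk : (k%:R : fpsR) = k'%:R + 1 by rewrite /k -addn1 natrD.
transitivity ((1 + k%:R * Cs) * (k%:R - k'%:R * P) - (k%:R - k'%:R * P)).
  ring.
rewrite h hk; ring.
Qed.

Lemma thP : th P = P * Cs.
Proof.
have U0 : (k%:R - k'%:R * P) 0%N != 0.
  rewrite subfE natME !natf0 hP0 mulr1 /k -addn1 natrD addrC addKr.
  by rewrite oner_eq0.
have E1 : zz * P ^+ k - P + 1 = 0 by rewrite {2}hP; ring.
have E4 : th P - zz * P ^+ k - zz * k%:R * P ^+ k' * th P = 0.
  rewrite {1}hP thD th1 thM thzz /k thX; ring.
apply: (mul_cancel U0).
rewrite mulrCA (mulrC _ Cs) CsU.
apply/eqP; rewrite -subr_eq0; apply/eqP.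
transitivity (P * (th P - zz * P ^+ k - zz * k%:R * P ^+ k' * th P)
  + (P + k%:R * th P) * (zz * P ^+ k - P + 1)).
  rewrite /k exprS -addn1 natrD; ring.
by rewrite E1 E4; ring.
Qed.

End PPart.

Lemma gbinomS a q : gbinom a q.+1 = gbinom a q * (a - q%:R) / q.+1%:R.
Proof.
rewrite /gbinom big_ord_recr /= factS natrM.
have h1 : (q`!)%:R != 0 :> rat by rewrite pnatr_eq0 -lt0n fact_gt0.
have h2 : (q.+1)%:R != 0 :> rat by rewrite pnatr_eq0.
field; have -> : (1 + q%:R : rat) = q.+1%:R by rewrite -natr1 addrC.
by rewrite h1 h2.
Qed.

Lemma gbinom0 a : gbinom a 0 = 1.
Proof. by rewrite /gbinom big_ord0 fact0 divr1. Qed.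

Definition Gf (n : nat) (s a : rat) : fpsR :=
  fun j => if (0 < j)%N && (n %| j)%N then - (n%:R * a) * s ^+ (j %/ n) else 0.

Lemma mulUE (H : fpsR) s n j :
  (H * (1 - cst s * zz ^+ n)) j = H j - s * (if (n <= j)%N then H (j - n)%N else 0).
Proof.
have -> : H * (1 - cst s * zz ^+ n) = H - cst s * (zz ^+ n * H) by ring.
by rewrite subfE cstME zzXE.
Qed.

Lemma binpow0 n s a : fps_binpow n s a 0%N = 1.
Proof. by rewrite /fps_binpow dvdn0 div0n gbinom0 expr0 mulr1. Qed.

Lemma binpow_low n s a l : (0 < l)%N -> (l < n)%N -> fps_binpow n s a l = 0.
Proof.
move=> l0 ln; rewrite /fps_binpow; case: ifP => // /(dvdn_leq l0).
by rewrite leqNgt ln.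
Qed.

Lemma thF n s a : (0 < n)%N ->
  th (fps_binpow n s a) = (fps_binpow n s a : fpsR) * Gf n s a.
Proof.
move=> n0.
set F : fpsR := fps_binpow n s a.
have U0 : (1 - cst s * zz ^+ n) 0%N != 0.
  rewrite subfE cstME -[zz ^+ n]mulr1 zzXE leqNgt n0 mulr0 subr0.
  by rewrite oner_eq0.
apply: (mul_cancel U0).
have GU : Gf n s a * (1 - cst s * zz ^+ n) = cst (- (n%:R * a * s)) * zz ^+ n.
  apply: funext => j; rewrite mulUE cstME -[zz ^+ n]mulr1 zzXE onefE /Gf.
  case: (leqP n j) => [nj|jn]; last first.
    case: ifP; rewrite ?mulr0 ?subr0 //.
    by case/andP => j0 /(dvdn_leq j0); rewrite leqNgt jn.
  rewrite -(subnK nj); set t := (j - n)%N; rewrite addnK.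
  have tn0 : (0 < t + n)%N by rewrite addn_gt0 n0 orbT.
  rewrite tn0 /= (dvdn_addl _ (dvdnn n)).
  case: (posnP t) => [->|t0].
    by rewrite dvdn0 add0n divnn n0 expr1 /= mulr1 mulr0 subr0 mulNr.
  rewrite /=; case: ifP => ntt; last by rewrite !mulr0 subr0.
  rewrite divnDl // divnn n0 addn1 exprS mulr0; ring.
rewrite (mulrCA _ F) (mulrC _ (Gf n s a)) GU mulrC.
apply: funext => j; rewrite mulUE mulrCA cstME (mulrC F) zzXE /th.
rewrite /F /fps_binpow.
case: (leqP n j) => [nj|jn]; last first.
  case: ifP; rewrite ?mulr0 ?subr0 //.
  case: (posnP j) => [->|j0]; first by rewrite mul0r.
  by move/(dvdn_leq j0); rewrite leqNgt jn.
rewrite -(subnK nj); set t := (j - n)%N; rewrite addnK (dvdn_addl _ (dvdnn n)).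
case: ifP => ntt; last by rewrite !mulr0 subr0.
rewrite divnDl // divnn n0 addn1.
move: ntt => /divnK tE; set q := (t %/ n)%N in tE *.
rewrite gbinomS -tE natrD natrM.
have h2 : (q.+1)%:R != 0 :> rat by rewrite pnatr_eq0.
rewrite exprS -natr1; field.
by rewrite natr1.
Qed.

Lemma mul_high (Q F : fpsR) i : F 0%N = 1 ->
  (forall l, (0 < l <= i)%N -> F l = 0) -> (Q * F) i = Q i.
Proof.
move=> F0 Fl; rewrite mulrC mulfE big_ord_recl F0 mul1r subn0 big1 ?addr0 //.
move=> l _; rewrite Fl ?mul0r //= /bump /= add1n ltn0Sn /=.
Qed.

Lemma sum_eval (I : Type) (r : seq I) (P : pred I) (F : I -> fpsR) j :
  (\sum_(i <- r | P i) F i) j = \sum_(i <- r | P i) F i j.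
Proof.
elim: r => [|x r IH]; first by rewrite !big_nil.
by rewrite !big_cons; case: (P x); rewrite ?addfE IH.
Qed.

Lemma divsum (N : nat) (F : nat -> rat) : (0 < N)%N ->
  \sum_(1 <= n < N.+1 | (n %| N)%N) F n = \sum_(d <- divisors N) F d.
Proof.
move=> N0; rewrite -big_filter; apply: perm_big; apply: uniq_perm.
- by rewrite filter_uniq // iota_uniq.
- exact: divisors_uniq.
move=> d; rewrite mem_filter mem_index_iota -dvdn_divisors //.
case dN: (d %| N)%N => //=; rewrite ltnS (dvdn_leq N0 dN) andbT.
by case: d dN => //; rewrite dvd0n => /eqP H; move: N0; rewrite H.
Qed.

Section Prod.
Variable m : nat.
Variable alpha : nat -> rat.

Definition Fa n : fpsR := fps_binpow n ((-1) ^+ (m * n)) (alpha n).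
Definition Ga n : fpsR := Gf n ((-1) ^+ (m * n)) (alpha n).
Definition Q J : fpsR := \prod_(1 <= n < J.+1) Fa n.
Definition S J : fpsR := \sum_(1 <= n < J.+1) Ga n.

Lemma thQ J : th (Q J) = Q J * S J.
Proof.
elim: J => [|J IH].
  by rewrite /Q /S !big_geq // th1 mulr0.
rewrite /Q /S (big_nat_recr J.+1 1) // (big_nat_recr J.+1 1) //= -/(Q J) -/(S J).
rewrite thM IH /Fa thF //.
rewrite -/(Fa J.+1) -/(Ga J.+1); ring.
Qed.

Lemma Qstab i J : (i <= J)%N -> Q J i = Q i i.
Proof.
elim: J => [|J IH]; first by rewrite leqn0 => /eqP ->.
rewrite leq_eqVlt => /orP [/eqP -> //|]; rewrite ltnS => iJ.
rewrite /Q (big_nat_recr J.+1 1) //= -/(Q J) mul_high ?IH //; first exact: binpow0.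
move=> l /andP [l0 li]; apply: binpow_low => //.
by rewrite ltnS (leq_trans li iJ).
Qed.

Lemma Sstab N J : (N <= J)%N -> S J N = S N N.
Proof.
elim: J => [|J IH]; first by rewrite leqn0 => /eqP ->.
rewrite leq_eqVlt => /orP [/eqP -> //|]; rewrite ltnS => NJ.
rewrite /S (big_nat_recr J.+1 1) //= -/(S J) addfE IH // /Ga /Gf.
case: ifP; rewrite ?addr0 // => /andP [N0 /(dvdn_leq N0)].
by rewrite leqNgt ltnS NJ.
Qed.

Definition Pi : fpsR := fun j => Q j j.
Definition Gs : fpsR := fun N => S N N.

Lemma PiE j : fps_infprod (fun n => fps_binpow n ((-1) ^+ (m * n)) (alpha n)) j = Pi j.
Proof. by []. Qed.

Lemma Pi0 : Pi 0%N = 1.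
Proof. by rewrite /Pi /Q big_geq. Qed.

Lemma Gs0 : Gs 0%N = 0.
Proof. by rewrite /Gs /S big_geq. Qed.

Lemma thPi : th Pi = Pi * Gs.
Proof.
apply: funext => j.
have := congr1 (fun f => f j) (thQ j); rewrite /th /= => ->.
rewrite !mulfE; apply: eq_bigr => i _.
rewrite /Pi /Gs Qstab; last by rewrite -ltnS.
by rewrite Sstab // leq_subr.
Qed.

Lemma GsE N : (0 < N)%N ->
  Gs N = - (-1) ^+ (m * N) * \sum_(d <- divisors N) d%:R * alpha d.
Proof.
move=> N0; rewrite -divsum // /Gs /S sum_eval mulr_sumr [RHS]big_mkcond /=.
apply: eq_bigr => n _; rewrite /Ga /Gf N0 /=.
case: ifP => // nN; rewrite -exprM -mulnA (mulnC n) divnK //; ring.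
Qed.

End Prod.

Local Close Scope ring_scope.

Lemma mu_sq p d : prime p -> (p * p %| d)%N -> moebius d = 0.
Proof.
move=> pp ppd; rewrite /moebius; case: (posnP d) => [->//|d0] /=.
case: ifP => // /allP /(_ p) h.
have pd : (p %| d)%N by apply: dvdn_trans ppd; apply: dvdn_mulr.
have := h; rewrite mem_primes pp d0 pd => /(_ isT) /eqP l1.
by move: ppd; rewrite mulnn pfactor_dvdn // l1.
Qed.

Lemma mu_p p e : prime p -> (0 < e)%N -> ~~ (p %| e)%N ->
  moebius (p * e) = (- moebius e)%R.
Proof.
move=> pp e0 npe.
have p0 := prime_gt0 pp.
have pe0 : (0 < p * e)%N by rewrite muln_gt0 p0.
have hperm : perm_eq (primes (p * e)) (p :: primes e).
  apply: uniq_perm; first exact: primes_uniq.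
    by rewrite /= primes_uniq andbT mem_primes (negbTE npe) !andbF.
  by move=> q; rewrite primesM // primes_prime // !inE.
have lp : forall q, q \in primes e -> logn q (p * e) = logn q e.
  move=> q; rewrite mem_primes => /and3P [qp _ qe].
  rewrite lognM // logn_prime //.
  case: eqP => [qp'|]; last by [].
  by move: npe; rewrite -qp' qe.
rewrite /moebius pe0 e0 /= (perm_all _ hperm) (perm_size hperm) /=.
rewrite lognM // logn_prime // eqxx (logn_coprime); last by rewrite prime_coprime.
rewrite addn0 /=.
rewrite (eq_in_all (a2 := fun q => logn q e == 1%N)); last first.
  by move=> q qe /=; rewrite lp.
by case: ifP => //; rewrite exprS mulN1r.
Qed.

Lemma mu_sum n : 0 < n -> (\sum_(d <- divisors n) moebius d = ((n == 1%N) : nat)%:Z)%R.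
Proof.
move=> n0; case: (eqVneq n 1%N) => [->|n1]; first by have -> : divisors 1 = [:: 1] by []; rewrite big_cons big_nil.
  have {}n1 : 1 < n by rewrite ltn_neqAle eq_sym n1 n0.
  set p := pdiv n.
  have pp : prime p by apply: pdiv_prime.
  have pn : p %| n by apply: pdiv_dvd.
  have p0 := prime_gt0 pp.
  rewrite (bigID (fun d => p %| d)) /=.
  have E1 : (\sum_(d <- divisors n | true && (p %| d)%N) moebius d =
     \sum_(d <- [seq d <- divisors n | (p %| d)%N && ~~ (p * p %| d)%N]) moebius d)%R.
    rewrite big_filter big_mkcond [RHS]big_mkcond /=; apply: eq_bigr => d _.
    by case: (p %| d) => //=; case: ifP => //= h; rewrite (mu_sq pp (negbFE h)).
  have E2 : perm_eq [seq d <- divisors n | (p %| d) && ~~ (p * p %| d)]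
                    [seq p * e | e <- [seq e <- divisors n | ~~ (p %| e)]].
    apply: uniq_perm.
    - by rewrite filter_uniq // divisors_uniq.
    - rewrite map_inj_uniq ?filter_uniq ?divisors_uniq //.
      by move=> x y /eqP; rewrite eqn_pmul2l // => /eqP.
    move=> x; rewrite mem_filter -dvdn_divisors //.
    apply/idP/mapP.
      case/andP => /andP [px nppx] xn; exists (x %/ p).
        rewrite mem_filter -dvdn_divisors //.
        apply/andP; split.
          apply/negP => /(dvdn_mul (dvdnn p)); rewrite mulnC divnK //.
          by rewrite (negbTE nppx).
        by apply: dvdn_trans xn; exact: dvdn_div.
      by rewrite mulnC divnK.
    case=> e; rewrite mem_filter -dvdn_divisors // => /andP [npe en] ->.
    rewrite dvdn_mulr //= dvdn_pmul2l // npe /=.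
    by rewrite Gauss_dvd ?prime_coprime // pn en.
  rewrite E1 (perm_big _ E2) big_map big_filter.
  have E3 : (\sum_(i <- divisors n | ~~ (p %| i)%N) moebius (p * i) =
     \sum_(i <- divisors n | ~~ (p %| i)%N) - moebius i)%R.
    rewrite big_seq_cond [RHS]big_seq_cond; apply: eq_bigr => i /andP [id npi].
    apply: mu_p => //; move: id; rewrite -dvdn_divisors //.
    by case: i {npi} => //; rewrite dvd0n => /eqP n0'; move: n0; rewrite n0'.
  by rewrite E3 sumrN addNr.
Qed.


Lemma div_pos d n : (0 < n)%N -> d \in divisors n -> (0 < d)%N.
Proof.
move=> n0; rewrite -dvdn_divisors //.
by case: d => //; rewrite dvd0n => /eqP n0'; move: n0; rewrite n0'.
Qed.

Lemma sub_divisors N d (F : nat -> rat) : (0 < N)%N -> (d %| N)%N ->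
  (\sum_(e <- divisors d) F e = \sum_(e <- divisors N | (e %| d)%N) F e)%R.
Proof.
move=> N0 dN.
have d0 : (0 < d)%N by apply: (div_pos N0); rewrite -dvdn_divisors.
rewrite -[RHS]big_filter; apply: perm_big; apply: uniq_perm.
- exact: divisors_uniq.
- by rewrite filter_uniq // divisors_uniq.
move=> e; rewrite mem_filter -!dvdn_divisors //.
by case ed: (e %| d)%N => //=; rewrite (dvdn_trans ed dN).
Qed.

Lemma inv_aux N e : (0 < N)%N -> (e %| N)%N ->
  (\sum_(d <- divisors N | (e %| d)%N) (moebius (d %/ e)%N)%:~R
  = (((N %/ e)%N == 1%N) : nat)%:R :> rat)%R.
Proof.
move=> N0 eN.
have e0 : (0 < e)%N by apply: (div_pos N0); rewrite -dvdn_divisors.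
have M0 : (0 < N %/ e)%N by rewrite divn_gt0 // (dvdn_leq N0 eN).
have P : perm_eq [seq d <- divisors N | (e %| d)%N] [seq (f * e)%N | f <- divisors (N %/ e)].
  apply: uniq_perm.
  - by rewrite filter_uniq // divisors_uniq.
  - rewrite map_inj_uniq ?divisors_uniq //.
    by move=> x y /eqP; rewrite eqn_pmul2r // => /eqP.
  move=> x; rewrite mem_filter -dvdn_divisors //; apply/idP/mapP.
    case/andP => ex xN; exists (x %/ e); last by rewrite divnK.
    rewrite -dvdn_divisors // -(@dvdn_pmul2r e) // !divnK //.
  case=> f; rewrite -dvdn_divisors // => fM ->.
  rewrite dvdn_mull //= -(divnK eN) dvdn_pmul2r //.
rewrite -big_filter (perm_big _ P) big_map.
under eq_bigr do rewrite mulnK //.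
rewrite -rmorph_sum /= mu_sum //.
Qed.

Lemma mobius_inv (h : nat -> rat) N : (0 < N)%N ->
  (\sum_(d <- divisors N) \sum_(e <- divisors d) (moebius (d %/ e)%N)%:~R * h e = h N)%R.
Proof.
move=> N0.
transitivity (\sum_(d <- divisors N) \sum_(e <- divisors N | (e %| d)%N)
                 (moebius (d %/ e)%N)%:~R * h e)%R.
  apply: eq_big_seq => d dN.
  by apply: sub_divisors; rewrite // dvdn_divisors.
under eq_bigr do rewrite big_mkcond /=.
rewrite exchange_big /=.
transitivity (\sum_(e <- divisors N) (((N %/ e)%N == 1%N) : nat)%:R * h e)%R.
  apply: eq_big_seq => e eN.
  rewrite -(inv_aux N0) ?dvdn_divisors // mulr_suml [RHS]big_mkcond /=.
  by apply: eq_bigr => d _; case: ifP; rewrite ?mul0r.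
rewrite (bigD1_seq N) ?divisors_id ?divisors_uniq //= divnn N0 /= mul1r.
rewrite big1_seq ?addr0 // => e /andP [neN eN].
have: (e %| N)%N by rewrite dvdn_divisors.
move/divnK; case: eqP => [-> |_]; last by rewrite mul0r.
by rewrite mul1n => eE; move: neN; rewrite eE eqxx.
Qed.

Local Open Scope ring_scope.

Lemma sgn2 (m N : nat) : (-1) ^+ (m * N) * (-1) ^+ (m * N) = 1 :> rat.
Proof. by rewrite -exprD addnn -mul2n exprM sqrrN !expr1n. Qed.

Lemma main_aux (m k' : nat) (P : fpsR) (hP0 : P 0%N = 1)
  (hP : P = 1 + zz * P ^+ k'.+1) :
  let h := fun N : nat => (-1) ^+ (m * N + 1) * Cs k' N in
  let astar := fun n : nat =>
     (\sum_(d <- divisors n) (moebius (n %/ d)%N)%:~R * h d) / n%:R in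
  P = Pi m astar /\
  (forall alpha, P = Pi m alpha -> forall n, (0 < n)%N -> alpha n = astar n).
Proof.
move=> h astar.
have thP' := thP hP0 hP.
have P0' : P 0%N != 0 by rewrite hP0 oner_eq0.
have Cs0 : Cs k' 0%N = 0 by [].
split.
  have GC : Gs m astar = Cs k'.
    apply: funext => N; case: (posnP N) => [->|N0]; first by rewrite Gs0.
    rewrite GsE //.
    rewrite (eq_big_seq (fun d => \sum_(e <- divisors d)
                (moebius (d %/ e)%N)%:~R * h e)); last first.
      move=> d dN; rewrite /astar mulrC divfK // pnatr_eq0 -lt0n.
      exact: (div_pos N0).
    rewrite mobius_inv // /h exprD expr1.
    have := sgn2 m N; set s := (-1) ^+ (m * N) => hs.
    by transitivity ((s * s) * Cs k' N); [ring | rewrite hs mul1r].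
  apply: (ode_uniq hP0 (Pi0 m astar) Cs0 thP').
  by rewrite thPi GC.
have key : forall alpha, P = Pi m alpha -> forall N, (0 < N)%N ->
    \sum_(d <- divisors N) d%:R * alpha d = h N.
  move=> alpha PE N N0.
  have GC : Gs m alpha = Cs k'.
    apply: (mul_cancel P0'); rewrite -thP' {1 2}PE thPi.
    by rewrite -PE.
  have := congr1 (fun f => f N) GC; rewrite /= GsE // /h exprD expr1.
  have := sgn2 m N; set s := (-1) ^+ (m * N); set S := \sum_(_ <- _) _ => hs <-.
  by transitivity ((s * s) * S); [rewrite hs mul1r | ring].
have akey : forall N, (0 < N)%N -> \sum_(d <- divisors N) d%:R * astar d = h N.
  move=> N N0; rewrite -(mobius_inv h N0); apply: eq_big_seq => d dN.
  rewrite /astar mulrC divfK // pnatr_eq0 -lt0n.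
  exact: (div_pos N0).
move=> alpha PE n; elim/ltn_ind: n => n IH n0.
have e1 := key alpha PE n n0; have e2 := akey n n0.
rewrite -e2 (bigD1_seq n) ?divisors_id ?divisors_uniq //= in e1.
rewrite (bigD1_seq n) ?divisors_id ?divisors_uniq //= in e1.
move: e1; rewrite big_seq_cond [X in _ = _ + X]big_seq_cond.
rewrite (eq_bigr (fun i => i%:R * astar i)); last first.
  move=> d /andP [dn nd]; rewrite IH //; last exact: (div_pos n0 dn).
  rewrite ltn_neqAle nd /= dvdn_leq // dvdn_divisors //.
move/addIr/(mulfI _); apply; by rewrite pnatr_eq0 -lt0n.
Qed.

Unset Implicit Arguments.
Theorem mainTheorem1 (m : nat) (hm : (2 <= m)%N) (P : fps)
  (hP0 : P 0%N = 1)
  (hP : P = fps_add fps_one (fps_z (fps_pow P ((m - 1) ^ 2)%N))) :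
  let factorization (alpha : nat -> rat) :=
    P = fps_infprod (fun n => fps_binpow n ((-1) ^+ (m * n)) (alpha n)) in
  (exists alpha : nat -> rat, factorization alpha) /\
  (forall alpha : nat -> rat, factorization alpha ->
     forall n : nat, (0 < n)%N ->
       m%:R * alpha n / n%:R =
       m%:R / (((m - 1) ^ 2 * n ^ 2)%N)%:R *
       \sum_(d <- divisors n)
          (-1) ^+ (m * d + 1) * (moebius (n %/ d))%:~R
          * ('C((m - 1) ^ 2 * d, d))%:R).
Proof.
move=> fact.
set k' := ((m - 1) ^ 2).-1.
have hk : ((m - 1) ^ 2)%N = k'.+1.
  by rewrite /k' prednK // expn_gt0 subn_gt0 hm.
have hP' : (P : fpsR) = 1 + zz * (P : fpsR) ^+ k'.+1.
  by rewrite {1}hP fps_zE fps_powE hk.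
have [Ex Un] := main_aux m hP0 hP'.
split.
  eexists; rewrite /fact; apply: funext => j; rewrite PiE.
  exact: (congr1 (fun f => f j) Ex).
move=> alpha fa n n0.
have PE : (P : fpsR) = Pi m alpha.
  by apply: funext => j; rewrite -PiE -fa.
rewrite (Un alpha PE n n0) hk.
set X := \sum_(d <- divisors n) _.
have -> : X = (\sum_(d <- divisors n) (-1) ^+ (m * d + 1) *
    (moebius (n %/ d)%N)%:~R * ('C(k'.+1 * d, d))%:R) / k'.+1%:R.
  rewrite /X mulr_suml; apply: eq_big_seq => d dn.
  rewrite /Cs (negbTE (lt0n_neq0 (div_pos n0 dn))).
  ring.
rewrite natrM natrX; field.
have -> : (1 + k'%:R : rat) = k'.+1%:R by rewrite -natr1 addrC.
by rewrite !pnatr_eq0 -lt0n n0.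
Qed.
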